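(* Let $G$ and $H$ be Hausdorff locally quasi-convex abelian groups. Let $\mathbb X(G,H)$ be the group of continuous bicharacters of $G\times H$ with the compact-open topology, and let $\mathbb X'(G,H)$ be the group of continuous characters of $\mathbb X(G,H)$ with the topology of uniform convergence on the equicontinuous subsets of $\mathbb X(G,H)$. Let $\mathcal E:G\times H\to\mathbb X'(G,H)$, $\mathcal E(x,y)(b)=b(x,y)$, and let $\mathcal E^{\otimes}:G\otimes H\to\mathbb X'(G,H)$ be the unique continuous homomorphism with $\mathcal E^{\otimes}\circ\otimes=\mathcal E$. Let $T=\mathcal E^{\otimes}(G\otimes H)$ with the subspace topology from $\mathbb X'(G,H)$. Then $(T,\mathcal E)$ is the $\mathcal Q$-tensor product of $G$ and $H$.
   Context: $\mathbb T=\mathbb R/\mathbb Z$ identified with $(-1/2,1/2]$. A continuous bihomomorphism $b:G\times H\to L$ is separately a continuous homomorphism in each variable and continuous at $(0,0)$; a continuous bicharacter is one with values in $\mathbb T$. The compact-open topology on $\mathbb X(G,H)$ has basic neighbourhoods of $0$ the sets $\{b:|b(z)|\le\epsilon\ \forall z\in K\}$, $K\subseteq G\times H$ compact, $\epsilon>0$; the topology on $\mathbb X'(G,H)$ has basic neighbourhoods $\{\psi:|\psi(b)|\le\epsilon\ \forall b\in E\}$, $E$ an equicontinuous subset of $\mathbb X(G,H)$, $\epsilon>0$. $G\otimes H$ denotes the tensor product in the category of all topological abelian groups: $A(G\times H)/N$ where $A(G\times H)$ is the free abelian topological group on the space $G\times H$ with canonical map $\sigma$ and $N$ is generated by the elements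 $\sigma(a+b,c)-\sigma(a,c)-\sigma(b,c)$ and $\sigma(a,c+d)-\sigma(a,c)-\sigma(a,d)$; $\otimes$ is $\sigma$ followed by the quotient map, and every continuous bihomomorphism from $G\times H$ factors uniquely through it via a continuous homomorphism. A subset $A$ of $L$ is quasi-convex if for every $g\notin A$ there is a continuous character $\chi$ with $|\chi(a)|\le1/4$ on $A$ and $|\chi(g)|>1/4$; $\mathcal Q$ is the class of Hausdorff abelian groups with a basis at $0$ of quasi-convex sets. A $\mathcal Q$-tensor product of $G,H\in\mathcal Q$ is a pair $(T,\phi)$ with $T\in\mathcal Q$, $\phi:G\times H\to T$ a continuous bihomomorphism, such that every continuous bihomomorphism $b:G\times H\to B$ with $B\in\mathcal Q$ factors as $b=\tilde b\circ\phi$ with $\tilde b:T\to B$ a continuous homomorphism. *)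

(* Defs.v *)
From HB Require Import structures.
From mathcomp Require Import all_boot all_order all_algebra.
From mathcomp Require Import all_classical all_reals all_analysis.
Set Implicit Arguments. Unset Strict Implicit. Unset Printing Implicit Defensive.
Import Order.TTheory GRing.Theory Num.Theory.
Local Open Scope classical_set_scope.
Local Open Scope ring_scope.

(* The circle group T = R/Z is modelled by its canonical representatives     *)
(* in [0,1):  an element of T is a real t with 0 <= t < 1, the group law is  *)
(* addition modulo 1 (via [frac]), and |t| (the absolute value of the        *)
(* representative of t in (-1/2,1/2]) is [tabs t] = min(t, 1-t).  The        *)
(* topology of T is the quotient topology, i.e. the one given by the         *)
(* invariant metric [tdist s t = |s - t|].                                   *)
Section Torus.
Context {R : realType}.

Definition frac (x : R) : R := x - (Num.floor x)%:~R.
Definition tor (t : R) : Prop := 0 <= t /\ t < 1.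
Definition tadd (s t : R) : R := frac (s + t).
Definition tabs (t : R) : R := Num.min t (1 - t).
Definition tdist (s t : R) : R := tabs (frac (s - t)).

(* "Topological abelian groups given concretely": a carrier S : set A       *)
(* inside an ambient type A, an addition [add], and a neighbourhood relation *)
(* [nb a U] ("U is a neighbourhood of a in S"; only U restricted to S        *)
(* matters).  For a topologicalZmodType B we use S = setT, add = +, nb =     *)
(* nbhs; for the subgroup T of X'(G,H) we use its subspace topology.         *)

Definition tcharS {A : Type} (S : set A) (add : A -> A -> A)
    (nb : A -> set A -> Prop) (chi : A -> R) : Prop :=
  [/\ (forall a, S a -> tor (chi a)),
      (forall a b, S a -> S b -> chi (add a b) = tadd (chi a) (chi b)) &
      (forall a, S a -> forall e : R, 0 < e ->
          nb a [set x | tdist (chi x) (chi a) < e])].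

Definition qconvexS {A : Type} (S : set A) (add : A -> A -> A)
    (nb : A -> set A -> Prop) (V : set A) : Prop :=
  forall g, S g -> ~ V g ->
    exists chi, [/\ tcharS S add nb chi,
                    (forall a, S a -> V a -> tabs (chi a) <= 1 / 4) &
                    1 / 4 < tabs (chi g)].

Definition hausdorffS {A : Type} (S : set A) (nb : A -> set A -> Prop) : Prop :=
  forall a b, S a -> S b -> a <> b ->
    exists U V, [/\ nb a U, nb b V & forall x, S x -> U x -> V x -> False].

Definition inQS {A : Type} (S : set A) (add : A -> A -> A) (zero : A)
    (nb : A -> set A -> Prop) : Prop :=
  hausdorffS S nb /\
  forall U, nb zero U ->
    exists V, [/\ nb zero V, (forall a, S a -> V a -> U a) & qconvexS S add nb V].

End Torus.

Definition inQ {R : realType} (B : topologicalZmodType) : Prop :=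
  @inQS R B setT +%R 0 (fun a U => nbhs a U).

Definition cont_bihom (G H L : topologicalZmodType) (b : G -> H -> L) : Prop :=
  [/\ (forall x x' y, b (x + x') y = b x y + b x' y),
      (forall x y y', b x (y + y') = b x y + b x y'),
      (forall y, continuous (fun x => b x y)),
      (forall x, continuous (b x)) &
      ((fun p : G * H => b p.1 p.2) @ nbhs ((0 : G), (0 : H)) --> (0 : L))].

Definition cont_hom (P L : topologicalZmodType) (h : P -> L) : Prop :=
  (forall p q, h (p + q) = h p + h q) /\ continuous h.

Definition is_tensor_product (G H P : topologicalZmodType) (tens : G -> H -> P)
  : Prop :=
  cont_bihom tens /\
  forall (L : topologicalZmodType) (b : G -> H -> L), cont_bihom b ->
    exists h : P -> L, [/\ cont_hom h, (forall x y, h (tens x y) = b x y) &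
      forall h' : P -> L, cont_hom h' -> (forall x y, h' (tens x y) = b x y) ->
        h' = h].

Section Bichar.
Context {R : realType} (G H : topologicalZmodType).

Definition tbichar (b : G -> H -> R) : Prop :=
  [/\ (forall x y, tor (b x y)),
      (forall x x' y, b (x + x') y = tadd (b x y) (b x' y)) /\
      (forall x y y', b x (y + y') = tadd (b x y) (b x y')),
      (forall y x0 (e : R), 0 < e ->
          \forall x \near x0, tdist (b x y) (b x0 y) < e),
      (forall x y0 (e : R), 0 < e ->
          \forall y \near y0, tdist (b x y) (b x y0) < e) &
      (forall e : R, 0 < e ->
          \forall p \near ((0 : G), (0 : H)), tabs (b p.1 p.2) < e)].

Record XT := MkXT { xval : G -> H -> R; xprop : tbichar xval }.

Definition equicont (E : set XT) : Prop :=
  forall (z : G * H) (e : R), 0 < e ->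
    \forall p \near z, forall b, E b -> tdist (xval b p.1 p.2) (xval b z.1 z.2) < e.

Definition xchar (psi : XT -> R) : Prop :=
  [/\ (forall b, tor (psi b)),
      (forall b1 b2 b3 : XT,
         (forall x y, xval b3 x y = tadd (xval b1 x y) (xval b2 x y)) ->
         psi b3 = tadd (psi b1) (psi b2)) &
      (forall (b0 : XT) (e : R), 0 < e ->
         exists (K : set (G * H)) (d : R), [/\ compact K, 0 < d &
           forall b : XT, (forall z, K z -> tdist (xval b z.1 z.2) (xval b0 z.1 z.2) <= d) ->
             tdist (psi b) (psi b0) < e])].

Definition X' : set (XT -> R) := [set psi | xchar psi].
Definition xadd (psi1 psi2 : XT -> R) : XT -> R := fun b => tadd (psi1 b) (psi2 b).
Definition xzero : XT -> R := fun _ => 0.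
Definition xnbhs (S : set (XT -> R)) (psi0 : XT -> R) (U : set (XT -> R)) : Prop :=
  exists (E : set XT) (e : R), [/\ equicont E, 0 < e &
    forall psi, S psi -> (forall b, E b -> tdist (psi b) (psi0 b) <= e) -> U psi].

Definition Emap (x : G) (y : H) : XT -> R := fun b => xval b x y.

Definition cont_hom_X' (P : topologicalZmodType) (Eo : P -> XT -> R) : Prop :=
  [/\ (forall p, X' (Eo p)),
      (forall p q, Eo (p + q) = xadd (Eo p) (Eo q)) &
      (forall p0 U, xnbhs X' (Eo p0) U -> \forall p \near p0, U (Eo p))].

Definition is_Q_tensor_product (S : set (XT -> R)) (phi : G -> H -> XT -> R)
  : Prop :=
  [/\ @inQS R _ S xadd xzero (xnbhs S),
      [/\ (forall x y, S (phi x y)),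
          (forall x x' y, phi (x + x') y = xadd (phi x y) (phi x' y)) /\
          (forall x y y', phi x (y + y') = xadd (phi x y) (phi x y')),
          (forall y x0 U, xnbhs S (phi x0 y) U -> \forall x \near x0, U (phi x y)),
          (forall x y0 U, xnbhs S (phi x y0) U -> \forall y \near y0, U (phi x y)) &
          (forall U, xnbhs S (phi 0 0) U ->
             \forall p \near ((0 : G), (0 : H)), U (phi p.1 p.2))] &
      forall (B : topologicalZmodType) (b : G -> H -> B),
        @inQ R B -> cont_bihom b ->
        exists bt : (XT -> R) -> B,
          [/\ (forall psi1 psi2, S psi1 -> S psi2 ->
                 bt (xadd psi1 psi2) = bt psi1 + bt psi2),
              (forall psi0 U, S psi0 -> nbhs (bt psi0) U ->
                 xnbhs S psi0 [set psi | U (bt psi)]) &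
              (forall x y, b x y = bt (phi x y))]].

End Bichar.

(* Main.v *)
Require Import Defs.
From HB Require Import structures.
From mathcomp Require Import all_boot all_order all_algebra.
From mathcomp Require Import all_classical all_reals all_analysis.
From mathcomp Require Import ring lra zify.
Import Order.TTheory GRing.Theory Num.Theory.
Local Open Scope classical_set_scope.
Local Open Scope ring_scope.
Local Notation frac := (@Defs.frac _).
Local Notation tor := (@Defs.tor _).
Local Notation tabs := (@Defs.tabs _).


Section Reals.
Context {R : realType}.
Implicit Types x y t u v : R.

Lemma frac_ge0 x : 0 <= frac x.
Proof. by rewrite /frac subr_ge0 floor_le. Qed.

Lemma frac_lt1 x : frac x < 1.
Proof. have := floorD1_gt x; rewrite /frac intrD => h; lra. Qed.

Lemma frac_tor x : tor (frac x).
Proof. by split; [apply: frac_ge0|apply: frac_lt1]. Qed.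

Lemma fracDz x (n : int) : frac (x + n%:~R) = frac x.
Proof. by rewrite /frac floorDrz ?intr_int // intrKfloor intrD; lra. Qed.

Lemma frac_id t : tor t -> frac t = t.
Proof.
move=> [h0 h1]; rewrite /frac (@floor_def _ t 0) ?subr0 //.
by rewrite h0 /= add0r.
Qed.

Lemma frac_frac x : frac (frac x) = frac x.
Proof. exact/frac_id/frac_tor. Qed.

Lemma frac_addl x y : frac (frac x + y) = frac (x + y).
Proof.
have -> : frac x + y = (x + y) + (- Num.floor x)%:~R by rewrite /frac intrN; lra.
exact: fracDz.
Qed.

Lemma frac_addr x y : frac (y + frac x) = frac (y + x).
Proof. by rewrite addrC frac_addl addrC. Qed.

Lemma frac_subl x y : frac (frac x - y) = frac (x - y).
Proof. exact: frac_addl. Qed.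

Lemma frac_subr x y : frac (y - frac x) = frac (y - x).
Proof.
have -> : y - frac x = (y - x) + (Num.floor x)%:~R by rewrite /frac; lra.
exact: fracDz.
Qed.

Lemma int_cases (n : int) : (n%:~R : R) <= -1 \/ n = 0 \/ 1 <= (n%:~R : R).
Proof.
have : (n <= -1 \/ n = 0 \/ 1 <= n)%R by lia.
case=> [h|[h|h]]; [left|right;left|right;right] => //.
  by rewrite -(intrN R 1) ler_int.
by rewrite -(ler_int R) in h.
Qed.

Definition dZ x := tabs (frac x).

Lemma tabs_dZ t : tor t -> tabs t = dZ t.
Proof. by move=> h; rewrite /dZ frac_id. Qed.

Lemma dZ_le x (n : int) : dZ x <= `|x - n%:~R|.
Proof.
rewrite /dZ /tabs.
have [h0 h1] := frac_tor x.
have -> : x - n%:~R = frac x - (n - Num.floor x)%:~R by rewrite /frac intrB; lra.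
case: (int_cases (n - Num.floor x)) => [h|[->|h]].
- rewrite ger0_norm; last lra.
  by rewrite ge_min; apply/orP; left; lra.
- by rewrite subr0 ger0_norm // ge_min lexx.
- rewrite ler0_norm; last lra.
  by rewrite ge_min; apply/orP; right; lra.
Qed.

Lemma dZ_eq x : exists n : int, dZ x = `|x - n%:~R|.
Proof.
rewrite /dZ /tabs; have [h0 h1] := frac_tor x.
case: (leP (frac x) (1 - frac x)) => h.
- exists (Num.floor x); rewrite /frac in h0 *; rewrite ger0_norm //.
- exists (Num.floor x + 1); rewrite /frac in h0 h1 *; rewrite intrD ler0_norm; lra.
Qed.

Lemma dZ_ge0 x : 0 <= dZ x.
Proof. by have [n ->] := dZ_eq x. Qed.

Lemma dZ_le_abs x : dZ x <= `|x|.
Proof. by have := dZ_le x 0; rewrite subr0. Qed.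

Lemma dZ0 : dZ 0 = 0.
Proof. by apply/le_anti; rewrite dZ_ge0 andbT; have := dZ_le_abs 0; rewrite normr0. Qed.

Lemma dZDz x (n : int) : dZ (x + n%:~R) = dZ x.
Proof. by rewrite /dZ fracDz. Qed.

Lemma dZ_frac x : dZ (frac x) = dZ x.
Proof. by rewrite /dZ frac_frac. Qed.

Lemma dZ_addl x y : dZ (frac x + y) = dZ (x + y).
Proof. by rewrite /dZ frac_addl. Qed.

Lemma dZ_addr x y : dZ (y + frac x) = dZ (y + x).
Proof. by rewrite /dZ frac_addr. Qed.

Lemma dZ_subl x y : dZ (frac x - y) = dZ (x - y).
Proof. by rewrite /dZ frac_subl. Qed.

Lemma dZ_subr x y : dZ (y - frac x) = dZ (y - x).
Proof. by rewrite /dZ frac_subr. Qed.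

Lemma dZN x : dZ (- x) = dZ x.
Proof.
apply/le_anti/andP; split.
  have [n ->] := dZ_eq x; have := dZ_le (- x) (- n).
  by rewrite intrN -opprD normrN.
have [n ->] := dZ_eq (- x); have := dZ_le x (- n).
by rewrite intrN -[x - _]opprK opprD opprK normrN.
Qed.

Lemma dZ_sym x y : dZ (x - y) = dZ (y - x).
Proof. by rewrite -dZN opprB. Qed.

Lemma dZ_tri x y : dZ (x + y) <= dZ x + dZ y.
Proof.
have [n ->] := dZ_eq x; have [m ->] := dZ_eq y.
apply: (le_trans (dZ_le _ (n + m))).
rewrite intrD (_ : x + y - _ = (x - n%:~R) + (y - m%:~R)); last lra.
exact: ler_normD.
Qed.

Lemma dZ_tri3 x y z : dZ (x - z) <= dZ (x - y) + dZ (y - z).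
Proof. by have := dZ_tri (x - y) (y - z); rewrite (_ : x - y + (y - z) = x - z) //; lra. Qed.

Lemma dZ0_eq u v : tor u -> tor v -> dZ (u - v) = 0 -> u = v.
Proof.
move=> [? ?] [? ?]; have [n ->] := dZ_eq (u - v) => /normr0_eq0 /eqP h.
case: (int_cases n) => [h'|[h'|h']]; try lra.
by move: h; rewrite h' subr0 subr_eq0 => /eqP.
Qed.

Lemma dZ2 t : dZ t <= 1/4 -> dZ (t + t) = 2 * dZ t.
Proof.
have [n ->] := dZ_eq t => h.
apply/le_anti/andP; split.
  apply: le_trans (dZ_le _ (n + n)) _; rewrite intrD.
  rewrite (_ : t + t - _ = 2 * (t - n%:~R)); last lra.
  by rewrite normrM ger0_norm.
have [m ->] := dZ_eq (t + t).
have hk : (m%:~R : R) = (m - n - n)%:~R + n%:~R + n%:~R by rewrite !intrB; lra.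
rewrite hk; move: (m - n - n) hk => k _.
have [ha|ha] := leP 0 (t - n%:~R).
- rewrite ger0_norm // in h *.
  case: (int_cases k) => [h'|[->|h']]; rewrite ler_normr; apply/orP.
  + by left; lra.
  + by left; lra.
  + by right; lra.
- rewrite ltr0_norm // in h *.
  case: (int_cases k) => [h'|[->|h']]; rewrite ler_normr; apply/orP.
  + by left; lra.
  + by right; lra.
  + by right; lra.
Qed.

Definition dbl t := frac (t + t).

Lemma dZ_iter_dbl (k : nat) t :
  (forall j, (j <= k)%N -> dZ (iter j dbl t) <= 1/4) -> dZ t * 2 ^+ k <= 1/4.
Proof.
elim: k t => [|k IH] t h; first by rewrite expr0 mulr1; exact: (h 0%N).
have h0 : dZ t <= 1/4 by exact: (h 0%N).
have h1 : forall j, (j <= k)%N -> dZ (iter j dbl (dbl t)) <= 1/4.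
  by move=> j hj; have := h j.+1 hj; rewrite iterSr.
have := IH (dbl t) h1.
by rewrite /dbl dZ_frac dZ2 // exprS mulrA (mulrC (dZ t) 2).
Qed.

End Reals.

Set Implicit Arguments.
Unset Strict Implicit.

Section TorusType.
Variable R : realType.

Record Tor := MkTor { tv : R; tvP : (0 <= tv) && (tv < 1) }.
HB.instance Definition _ := [isSub for tv].
HB.instance Definition _ := [Choice of Tor by <:].

Lemma frac_torb (x : R) : (0 <= frac x) && (frac x < 1).
Proof. by rewrite frac_ge0 frac_lt1. Qed.

Definition toT (x : R) : Tor := @MkTor (frac x) (frac_torb x).

Lemma tv_toT x : tv (toT x) = frac x. Proof. by []. Qed.

Lemma tv_tor a : tor (tv a).
Proof. by case: a => t /= /andP. Qed.

Lemma toT_tv a : toT (tv a) = a.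
Proof. by apply: val_inj => /=; rewrite frac_id //; apply: tv_tor. Qed.

Lemma toT_frac x : toT (frac x) = toT x.
Proof. by apply: val_inj => /=; rewrite frac_frac. Qed.

Lemma toT_eq x y : frac x = frac y -> toT x = toT y.
Proof. by move=> h; apply: val_inj. Qed.

Definition Tzero := toT 0.
Definition Tadd a b := toT (tv a + tv b).
Definition Topp a := toT (- tv a).

Lemma TaddA : associative Tadd.
Proof. by move=> a b c; apply: val_inj => /=; rewrite frac_addr frac_addl addrA. Qed.
Lemma TaddC : commutative Tadd.
Proof. by move=> a b; apply: val_inj => /=; rewrite addrC. Qed.
Lemma Tadd0 : left_id Tzero Tadd.
Proof. by move=> a; apply: val_inj => /=; rewrite frac_addl add0r frac_id //; apply: tv_tor. Qed.
Lemma TaddN : left_inverse Tzero Topp Tadd.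
Proof. by move=> a; apply: val_inj => /=; rewrite frac_addl addNr. Qed.

HB.instance Definition _ := GRing.isZmodule.Build Tor TaddA TaddC Tadd0 TaddN.

Lemma tv_add a b : tv (a + b) = frac (tv a + tv b). Proof. by []. Qed.
Lemma tv_opp a : tv (- a) = frac (- tv a). Proof. by []. Qed.
Lemma tv_sub a b : tv (a - b) = frac (tv a - tv b).
Proof. by rewrite tv_add tv_opp frac_addr. Qed.
Lemma tv0 : tv (0 : Tor) = 0. Proof. by apply: (@frac_id R); split; lra. Qed.

Lemma toTD x y : toT (x + y) = toT x + toT y.
Proof. by apply: val_inj; rewrite /= frac_addl frac_addr. Qed.
Lemma toT0 : toT 0 = 0. Proof. by []. Qed.

Definition tmd (a b : Tor) : R := dZ (tv a - tv b).

Lemma tmdxx a : tmd a a = 0. Proof. by rewrite /tmd subrr dZ0. Qed.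
Lemma tmd_pos a b : tmd a b = 0 -> a = b.
Proof. by move=> h; apply: val_inj; apply: dZ0_eq h; apply: tv_tor. Qed.
Lemma tmd_sym a b : tmd a b = tmd b a. Proof. exact: dZ_sym. Qed.
Lemma tmd_tri b a c : tmd a c <= tmd a b + tmd b c. Proof. exact: dZ_tri3. Qed.

HB.instance Definition _ := isMetric.Build R Tor tmdxx tmd_pos tmd_sym tmd_tri.

Lemma ballT (a : Tor) e b : ball a e b = (tmd a b < e).
Proof. by []. Qed.

Lemma Tsub_cont : continuous (fun x : Tor * Tor => x.1 - x.2).
Proof.
move=> [a0 b0]; apply/cvg_ballP => e e0.
have := nbhsx_ballx (a0, b0) (e / 2) (ltac:(lra)).
apply: filterS => -[a b] [/= h1 h2].
rewrite ballT /tmd !tv_sub dZ_subl dZ_subr.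
move: h1 h2; rewrite !ballT /tmd (dZ_sym (tv b0)) => h1 h2.
have := dZ_tri (tv a0 - tv a) (tv b - tv b0).
rewrite (_ : tv a0 - tv a + (tv b - tv b0) = tv a0 - tv b0 - (tv a - tv b)); last lra.
move=> h; lra.
Qed.

HB.instance Definition _ :=
  PreTopologicalNmodule_isTopologicalZmodule.Build Tor Tsub_cont.

Check (Tor : topologicalZmodType).
End TorusType.
Arguments tv {R}.
Arguments tmd {R}.

Set Implicit Arguments.
Unset Strict Implicit.

Section General.

Lemma cvg_add (T : Type) (F : set_system T) {FF : Filter F}
  (L : topologicalZmodType) (f g : T -> L) a b :
  f @ F --> a -> g @ F --> b -> (fun t => f t + g t) @ F --> a + b.
Proof.
move=> hf hg.
apply: (@cvg_comp _ _ _ (fun t => (f t, g t)) (fun x : L * L => x.1 + x.2) F (nbhs (a, b))).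
  exact: cvg_pair.

exact: (@add_continuous L (a, b)).
Qed.

Lemma cvg_subc (T : Type) (F : set_system T) {FF : Filter F}
  (L : topologicalZmodType) (f : T -> L) a :
  f @ F --> a -> (fun t => f t - a) @ F --> 0.
Proof.
move=> hf; rewrite -(subrr a); apply: cvg_add => //.
exact: cvg_cst.
Qed.

Variables (G H L : topologicalZmodType).

Lemma bihom_x0 (b : G -> H -> L) : cont_bihom b -> forall x, b x 0 = 0.
Proof.
case=> _ hy _ _ _ x; have := hy x 0 0; rewrite addr0 => /eqP.
by rewrite -subr_eq subrr eq_sym => /eqP.
Qed.

Lemma bihom_0y (b : G -> H -> L) : cont_bihom b -> forall y, b 0 y = 0.
Proof.
case=> hx _ _ _ _ y; have := hx 0 0 y; rewrite addr0 => /eqP.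
by rewrite -subr_eq subrr eq_sym => /eqP.
Qed.

Lemma bihom_joint (b : G -> H -> L) : cont_bihom b ->
  forall z : G * H, (fun p : G * H => b p.1 p.2) @ nbhs z --> b z.1 z.2.
Proof.
move=> hb [x0 y0] /=.
have [hx hy cx cy c0] := hb.
have dec : forall x y, b x y = (b x y0 + b x0 (y - y0)) + b (x - x0) (y - y0).
  move=> x y.
  have e1 : b x y = b x y0 + b x (y - y0) by rewrite -hy addrCA subrr addr0.
  have e2 : b x (y - y0) = b x0 (y - y0) + b (x - x0) (y - y0)
    by rewrite -hx addrCA subrr addr0.
  by rewrite e1 e2 addrA.
rewrite (_ : (fun p : G * H => b p.1 p.2) =
   (fun p => (b p.1 y0 + b x0 (p.2 - y0)) + b (p.1 - x0) (p.2 - y0))); last first.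
  by apply: funext => p; rewrite -dec.
rewrite -[b x0 y0]addr0 -[b x0 y0]addr0.
apply: cvg_add; first apply: cvg_add.
- apply: (@cvg_comp _ _ _ fst (fun x => b x y0) _ (nbhs x0)).
    exact: cvg_fst.
  exact: cx.
- rewrite -(bihom_x0 hb x0).
  apply: (@cvg_comp _ _ _ (fun p : G * H => p.2 - y0) (b x0) _ (nbhs 0)).
    by apply: cvg_subc; exact: cvg_snd.
  exact: cy.
- apply: (@cvg_comp _ _ _ (fun p : G * H => (p.1 - x0, p.2 - y0))
     (fun q : G * H => b q.1 q.2) _ (nbhs (0, 0))) => //.
  apply: cvg_pair; apply: cvg_subc; [exact: cvg_fst|exact: cvg_snd].
Qed.

End General.

Lemma hom0 (L M : topologicalZmodType) (f : L -> M) :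
  (forall p q, f (p + q) = f p + f q) -> f 0 = 0.
Proof.
move=> hf; have := hf 0 0; rewrite addr0 => /eqP.
by rewrite -subr_eq subrr eq_sym => /eqP.
Qed.

Lemma comp_bihom (G H L M : topologicalZmodType) (f : L -> M) (b : G -> H -> L) :
  cont_hom f -> cont_bihom b -> cont_bihom (fun x y => f (b x y)).
Proof.
move=> [fa fc] [hx hy cx cy c0]; split.
- by move=> x x' y; rewrite hx fa.
- by move=> x y y'; rewrite hy fa.
- move=> y x; apply: (@cvg_comp _ _ _ (b^~ y) f _ (nbhs (b x y))); [exact: cx|exact: fc].
- move=> x y; apply: (@cvg_comp _ _ _ (b x) f _ (nbhs (b x y))); [exact: cy|exact: fc].
- rewrite -(hom0 fa).
  apply: (@cvg_comp _ _ _ (fun p : G * H => b p.1 p.2) f _ (nbhs 0)) => //.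
  exact: fc.
Qed.

Lemma comp_hom (K L M : topologicalZmodType) (f : K -> L) (g : L -> M) :
  cont_hom f -> cont_hom g -> cont_hom (fun p => g (f p)).
Proof.
move=> [fa fc] [ga gc]; split; first by move=> p q; rewrite fa ga.
move=> p; apply: (@cvg_comp _ _ _ f g _ (nbhs (f p))); [exact: fc|exact: gc].
Qed.

Section Chars.
Variable R : realType.
Local Notation Tor := (Tor R).

Lemma tmdE (u v : Tor) : tmd u v = dZ (tv (u - v)).
Proof. by rewrite tv_sub dZ_frac. Qed.

Lemma Dbl_hom : cont_hom (fun u : Tor => u + u).
Proof.
split; first by move=> p q; rewrite addrACA.
move=> p; exact: (@cvg_add _ (nbhs p) _ Tor id id p p cvg_id cvg_id).
Qed.

Lemma toT_dbl (t : R) : toT (dbl t) = toT t + toT t.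
Proof. by rewrite /dbl toT_frac toTD. Qed.

Variables (G H : topologicalZmodType).

Lemma tbichar_toT (g : G -> H -> R) :
  tbichar g -> cont_bihom (fun x y => toT (g x y)).
Proof.
move=> [ht [hx hy] cx cy c0]; split.
- by move=> x x' y; rewrite hx /tadd toT_frac toTD.
- by move=> x y y'; rewrite hy /tadd toT_frac toTD.
- move=> y x0; apply/cvg_ballP => e e0.
  have := cx y x0 e e0; apply: filterS => x h.
  by rewrite ballT /tmd !tv_toT dZ_subl dZ_subr dZ_sym.
- move=> x y0; apply/cvg_ballP => e e0.
  have := cy x y0 e e0; apply: filterS => y h.
  by rewrite ballT /tmd !tv_toT dZ_subl dZ_subr dZ_sym.
- apply/cvg_ballP => e e0.
  have := c0 e e0; apply: filterS => p h.
  by rewrite ballT /tmd tv0 tv_toT dZ_subr sub0r dZN -tabs_dZ.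
Qed.

Lemma toT_tbichar (g : G -> H -> R) :
  (forall x y, tor (g x y)) -> cont_bihom (fun x y => toT (g x y)) -> tbichar g.
Proof.
move=> ht [hx hy cx cy c0]; split => //.
- split.
  + move=> x x' y; have := congr1 tv (hx x x' y).
    by rewrite tv_add !tv_toT frac_addl frac_addr frac_id.
  + move=> x y y'; have := congr1 tv (hy x y y').
    by rewrite tv_add !tv_toT frac_addl frac_addr frac_id.
- move=> y x0 e e0; apply: filterS (cvg_ball (cx y x0) e0) => x; rewrite ballT /tmd !tv_toT dZ_subl dZ_subr dZ_sym.
  by [].
- move=> x y0 e e0; apply: filterS (cvg_ball (cy x y0) e0) => y; rewrite ballT /tmd !tv_toT dZ_subl dZ_subr dZ_sym.
  by [].
- move=> e e0; apply: filterS (cvg_ball c0 e0) => p; rewrite ballT /tmd tv0 tv_toT dZ_subr sub0r dZN tabs_dZ //.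
Qed.

End Chars.

Set Implicit Arguments.
Unset Strict Implicit.

Section Real2.
Variable R : realType.

Lemma exists_k (e : R) : 0 < e -> exists k : nat, 1/4 < e * 2 ^+ k.
Proof.
move=> e0.
have h0 : 0 <= 1 / (4 * e) by apply: divr_ge0 => //; lra.
have := archi_boundP h0; set n := Num.Def.archi_bound _ => hn.
exists n.
have h2 : (n%:R : R) <= 2 ^+ n.
  by rewrite -natrX ler_nat ltnW // ltn_expl.
have : 1 / (4 * e) < 2 ^+ n by apply: lt_le_trans h2.
rewrite ltr_pdivrMr; last lra.
have -> : 2 ^+ n * (4 * e) = 4 * (e * 2 ^+ n) by ring.
move=> h; lra.
Qed.

Lemma dZ_dbl (u v : R) : dZ (dbl u - dbl v) <= 2 * dZ (u - v).
Proof.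
rewrite /dbl dZ_subl dZ_subr.
have := dZ_tri (u - v) (u - v).
by rewrite (_ : u - v + (u - v) = u + u - (v + v)); [lra|lra].
Qed.

Lemma dZ_iter (j : nat) (u v : R) :
  dZ (iter j dbl u - iter j dbl v) <= 2 ^+ j * dZ (u - v).
Proof.
elim: j => [|j IH]; first by rewrite /= expr0 mul1r.
rewrite !iterS exprS -mulrA.
apply: le_trans (dZ_dbl _ _) _.
by rewrite ler_pM2l //.
Qed.

Lemma tmd_toT (u v : R) : tmd (toT u) (toT v) = dZ (u - v).
Proof. by rewrite /tmd !tv_toT dZ_subl dZ_subr. Qed.

End Real2.

Section Chars2.
Variable R : realType.
Local Notation Tor := (Tor R).

Definition tch (B : topologicalZmodType) (chi : B -> R) :=
  @tcharS R B setT +%R (fun a U => nbhs a U) chi.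

Lemma tch_hom (B : topologicalZmodType) (chi : B -> R) :
  tch chi -> (forall a, tor (chi a)) /\ cont_hom (fun a => toT (chi a)).
Proof.
move=> [ht ha hc]; split; first by move=> a; exact: ht.
split.
  by move=> p q; rewrite ha // /tadd toT_frac toTD.
move=> p0; apply/cvg_ballP => e e0.
apply: filterS (hc p0 I e e0) => x /= h.
by rewrite ballT tmd_toT dZ_sym.
Qed.

Lemma hom_sub (K L : topologicalZmodType) (f : K -> L) :
  (forall p q, f (p + q) = f p + f q) -> forall p q, f p - f q = f (p - q).
Proof. by move=> hf p q; have := hf (p - q) q; rewrite subrK => ->; rewrite addrK. Qed.

Variables (G H : topologicalZmodType).

Lemma tch_comp (B : topologicalZmodType) (b : G -> H -> B) (chi : B -> R) :
  cont_bihom b -> tch chi -> tbichar (fun x y => chi (b x y)).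
Proof.
move=> hb hc; have [ht hh] := tch_hom hc.
apply: toT_tbichar => // ; exact: (comp_bihom hh hb).
Qed.

Lemma xdbl (g : G -> H -> R) : tbichar g -> tbichar (fun x y => dbl (g x y)).
Proof.
move=> hg; apply: toT_tbichar; first by move=> x y; apply: frac_tor.
have -> : (fun x y => toT (dbl (g x y))) = (fun x y => (fun u : Tor => u + u) (toT (g x y))).
  by apply: funext => x; apply: funext => y; rewrite toT_dbl.
exact: (comp_bihom (@Dbl_hom R) (tbichar_toT hg)).
Qed.

Definition Dx (b : @XT R G H) : @XT R G H := MkXT (xdbl (xprop b)).

Lemma xval_iter (j : nat) (b : @XT R G H) x y :
  xval (iter j Dx b) x y = iter j dbl (xval b x y).
Proof. by elim: j => [|j IH] //=; rewrite IH. Qed.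

Lemma xchar_iter (psi : @XT R G H -> R) (j : nat) (b : @XT R G H) :
  xchar psi -> psi (iter j Dx b) = iter j dbl (psi b).
Proof.
move=> [_ hadd _]; elim: j => [|j IH] //=.
by rewrite -IH; apply: hadd.
Qed.

Lemma equicont1 (b0 : @XT R G H) : equicont [set b0].
Proof.
move=> z e e0.
have hj := @bihom_joint _ _ _ _ (tbichar_toT (xprop b0)) z.
apply: filterS (cvg_ball hj e0) => p hp b ->.
by move: hp; rewrite ballT tmd_toT dZ_sym.
Qed.

Lemma equicont_sub (E F : set (@XT R G H)) : equicont E -> F `<=` E -> equicont F.
Proof.
move=> hE hF z e e0; apply: filterS (hE z e e0) => p hp b hb.
exact/hp/hF.
Qed.

Lemma equicont_iter (E : set (@XT R G H)) (k : nat) : equicont E ->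
  equicont [set beta | exists j, (j <= k)%N /\ exists b, E b /\ beta = iter j Dx b].
Proof.
move=> hE z e e0.
have ek : 0 < e / 2 ^+ k by apply: divr_gt0 => //; apply: exprn_gt0.
apply: filterS (hE z _ ek) => p hp beta [j [hj [b [hb ->]]]].
rewrite /tdist !xval_iter.
apply: le_lt_trans (dZ_iter _ _ _) _.
have h1 := hp b hb.
have h2 : (2 ^+ j : R) <= 2 ^+ k.
  have : (2 ^ j <= 2 ^ k)%N by rewrite leq_exp2l.
  by rewrite -(ler_nat R) !natrX.
have h3 : (0 : R) < 2 ^+ j by apply: exprn_gt0.
have h4 : (0 : R) < 2 ^+ k by apply: exprn_gt0.
have : 2 ^+ j * dZ (xval b p.1 p.2 - xval b z.1 z.2) < 2 ^+ j * (e / 2 ^+ k).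
  by rewrite ltr_pM2l.
move=> h; apply: lt_le_trans h _.
rewrite mulrA ler_pdivrMr // mulrC ler_pM2l //.
Qed.

End Chars2.

Set Implicit Arguments.
Unset Strict Implicit.

Section Polar.
Variable R : realType.
Variables (B : topologicalZmodType).

Definition Dd (w : B) := w + w.

Lemma iterD0 (j : nat) : iter j Dd 0 = 0.
Proof. by elim: j => [|j IH] //=; rewrite IH /Dd addr0. Qed.

Lemma iterD_cont (j : nat) : continuous (iter j Dd).
Proof.
elim: j => [|j IH] /=; first by move=> x; exact: cvg_id.
move=> x; apply: (@cvg_comp _ _ _ (iter j Dd) Dd _ (nbhs (iter j Dd x))).
  exact: IH.
by apply: cvg_add; exact: cvg_id.
Qed.

Lemma nbhs_iterD (V : set B) (k : nat) : nbhs 0 V ->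
  nbhs 0 [set w | forall j, (j <= k)%N -> V (iter j Dd w)].
Proof.
move=> hV; elim: k => [|k IH].
  by apply: filterS hV => w hw [|j] //.
have hk : nbhs 0 [set w | V (iter k.+1 Dd w)].
  have hc : iter k.+1 Dd @ (0:B) --> iter k.+1 Dd 0 := @iterD_cont k.+1 0.
  rewrite iterD0 in hc.
  exact: hc _ hV.
apply: filterS (filterI IH hk) => w [h1 h2] j; rewrite leq_eqVlt => /orP [/eqP -> //|].
by rewrite ltnS; apply: h1.
Qed.

Lemma tch_iterD (chi : B -> R) (j : nat) (w : B) :
  tch chi -> chi (iter j Dd w) = iter j dbl (chi w).
Proof.
move=> [ht ha _]; elim: j => [|j IH] //=.
by rewrite /Dd ha // IH.
Qed.

Variables (G H : topologicalZmodType).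

Lemma equicont_polar (b : G -> H -> B) (V : set B) :
  cont_bihom b -> nbhs 0 V ->
  equicont [set beta : @XT R G H | exists chi, [/\ tch chi,
     (forall a, setT a -> V a -> tabs (chi a) <= 1/4) &
     forall x y, xval beta x y = chi (b x y)]].
Proof.
move=> hb hV z e e0.
have [k hk] := exists_k e0.
have hW := nbhs_iterD k hV.
have hc := cvg_subc (@bihom_joint _ _ _ _ hb z).
have hz : \forall p \near z, (forall j, (j <= k)%N -> V (iter j Dd (b p.1 p.2 - b z.1 z.2))) := hc (nbhs_filter z) _ hW.
apply: filterS hz => p hp beta [chi [hchi hpol hbeta]].
rewrite !hbeta; change (dZ (chi (b p.1 p.2) - chi (b z.1 z.2)) < e).
have [ht hh] := tch_hom hchi.
have : dZ (chi (b p.1 p.2) - chi (b z.1 z.2)) = dZ (chi (b p.1 p.2 - b z.1 z.2)).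
  rewrite -tmd_toT tmdE (hom_sub hh.1) tv_toT dZ_frac //.
move=> ->; set w := b p.1 p.2 - b z.1 z.2.
have h1 : dZ (chi w) * 2 ^+ k <= 1/4.
  apply: dZ_iter_dbl => j hj.
  rewrite -tch_iterD // -tabs_dZ //.
  by apply: hpol => //; apply: hp.
have h2 : (0 : R) < 2 ^+ k by apply: exprn_gt0.
rewrite -(ltr_pM2r h2); lra.
Qed.

End Polar.

Unset Implicit Arguments.

Lemma xnbhs_SX' (R : realType) (G H : topologicalZmodType) (S : set (@XT R G H -> R)) psi0 U :
  xnbhs S psi0 U -> xnbhs (@X' R G H) psi0 [set psi | S psi -> U psi].
Proof.
move=> [E [e [hE he hU]]]; exists E, e; split => // psi _ h hS.
exact: hU.
Qed.

Section Main.
Variables (R : realType) (G H : topologicalZmodType)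
  (hG : @inQ R G) (hH : @inQ R H)
  (P : topologicalZmodType) (tens : G -> H -> P)
  (htens : is_tensor_product tens)
  (Eo : P -> @XT R G H -> R)
  (hEo : cont_hom_X' Eo)
  (hEotens : forall x y, Eo (tens x y) = Emap x y).

Local Notation S := (range Eo).

Lemma S_char psi : S psi -> xchar psi.
Proof. by case: hEo => hX _ _ [p _ <-]; exact: hX. Qed.

Lemma S_tor psi b : S psi -> tor (psi b).
Proof. by move=> /S_char [h _ _]. Qed.

Lemma part_haus : hausdorffS S (xnbhs S).
Proof.
move=> a c [p _ <-] [q _ <-] hne.
have : ~ (forall beta, Eo p beta = Eo q beta) by move=> h; apply: hne; apply: funext.
move/existsNP => [beta hbeta].
set d := dZ (Eo p beta - Eo q beta).
have d0 : 0 < d.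
  rewrite lt_neqAle dZ_ge0 andbT eq_sym; apply/eqP => h.
  by apply: hbeta; apply: dZ0_eq h; apply: S_tor; [exists p|exists q].
exists [set psi | dZ (psi beta - Eo p beta) < d / 2],
       [set psi | dZ (psi beta - Eo q beta) < d / 2]; split.
- exists [set beta], (d / 3); split; [exact: equicont1|lra|].
  move=> psi _ h; have := h beta erefl; rewrite /tdist /= -/(dZ _) => h'; lra.
- exists [set beta], (d / 3); split; [exact: equicont1|lra|].
  move=> psi _ h; have := h beta erefl; rewrite /tdist /= -/(dZ _) => h'; lra.
- move=> x _ /= h1 h2.
  have := dZ_tri3 (Eo p beta) (x beta) (Eo q beta).
  rewrite -/d dZ_sym; lra.
Qed.


Lemma part_basis : forall U, xnbhs S (@xzero R G H) U ->
    exists V, [/\ xnbhs S (@xzero R G H) V, (forall a, S a -> V a -> U a) &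
                  @qconvexS R _ S (@xadd R G H) (xnbhs S) V].
Proof.
move=> U [E [e [hE e0 hU]]].
have [k hk] := exists_k e0.
set E' := [set beta | exists j, (j <= k)%N /\ exists b, E b /\ beta = iter j (@Dx R G H) b].
have hE' : equicont E' by exact: equicont_iter.
exists [set psi | forall beta, E' beta -> tabs (psi beta) <= 1/4]; split.
- exists E', (1/4); split => //.
  move=> psi hS h beta hb; have := h beta hb.
  by rewrite /tdist /xzero subr0 -/(dZ _) tabs_dZ //; apply: S_tor.
- move=> psi hS hV; apply: hU => // b hb.
  rewrite /tdist /xzero subr0 -/(dZ _).
  have h1 : dZ (psi b) * 2 ^+ k <= 1/4.
    apply: dZ_iter_dbl => j hj.
    rewrite -(@xchar_iter R G H psi j b (S_char _ hS)) -tabs_dZ; last exact: S_tor.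
    by apply: hV; exists j; split => //; exists b.
  have h2 : (0 : R) < 2 ^+ k by apply: exprn_gt0.
  rewrite -(ler_pM2r h2); lra.
- move=> g hg hnV.
  have : ~ (forall beta, E' beta -> tabs (g beta) <= 1/4) by [].
  move/existsNP => [beta /not_implyP [hb hnle]].
  exists (fun psi => psi beta); split.
  + split.
    * by move=> a ha; apply: S_tor.
    * by [].
    * move=> a ha e1 e1p; exists E', (e1 / 2); split => //; first lra.
      move=> psi _ h; have := h beta hb; move=> h'; rewrite /=; lra.
  + by move=> a _ ha; apply: ha.
  + by rewrite ltNge; apply/negP.
Qed.





Lemma part_univ (B : topologicalZmodType) (b : G -> H -> B) :
  @inQ R B -> cont_bihom b ->
  exists bt : (@XT R G H -> R) -> B,
    [/\ (forall psi1 psi2, S psi1 -> S psi2 ->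
           bt (xadd psi1 psi2) = bt psi1 + bt psi2),
        (forall psi0 U, S psi0 -> nbhs (bt psi0) U ->
           xnbhs S psi0 [set psi | U (bt psi)]) &
        (forall x y, b x y = bt (Emap x y))].
Proof.
move=> hB hb.
have [_ htU] := htens.
have [h [hh hht _]] := htU B b hb.
have [hX hadd hcont] := hEo.
have key : forall chi (hc : tch chi) p, Eo p (MkXT (tch_comp hb hc)) = chi (h p).
  move=> chi hc p.
  set beta := MkXT (tch_comp hb hc).
  have [ht hch] := tch_hom hc.
  have hbT := comp_bihom hch hb.
  have [hT [_ _ huT]] := htU _ _ hbT.
  have h1hom : cont_hom (fun p => toT (Eo p beta)).
    split.
      by move=> p1 p2; rewrite hadd /xadd /tadd toT_frac toTD.
    move=> p0; apply/cvg_ballP => e e0.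
    have hN : xnbhs (@X' R G H) (Eo p0) [set psi | dZ (psi beta - Eo p0 beta) < e].
      exists [set beta], (e/2); split; [exact: equicont1|lra|].
      move=> psi _ hp; have := hp beta erefl; rewrite /=.
      change (tdist (psi beta) (Eo p0 beta) <= e / 2 -> tdist (psi beta) (Eo p0 beta) < e).
      move=> h'; lra.
    apply: filterS (hcont p0 _ hN) => p1 /= hp1.
    by rewrite ballT tmd_toT dZ_sym.
  have h2hom : cont_hom (fun p => toT (chi (h p))) := comp_hom hh hch.
  have q1 : forall x y, toT (Eo (tens x y) beta) = toT (chi (b x y)).
    by move=> x y; rewrite hEotens.
  have q2 : forall x y, toT (chi (h (tens x y))) = toT (chi (b x y)).
    by move=> x y; rewrite hht.
  have e1 := huT _ h1hom q1.
  have e2 := huT _ h2hom q2.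
  have := congr1 (fun f => tv (f p)) (etrans e1 (esym e2)).
  rewrite /= frac_id; last by apply: S_tor; exists p.
  by rewrite frac_id.
have wd : forall p q, Eo p = Eo q -> h p = h q.
  move=> p q hpq; apply: contrapT => hne.
  have [hsep hbas] := hB.
  have hne' : h p - h q <> 0 by move=> /eqP; rewrite subr_eq0 => /eqP.
  have [U [V [hU hV hUV]]] := hsep _ _ I I hne'.
  have [V' [hV' hsub hqc]] := hbas V hV.
  have hnV' : ~ V' (h p - h q).
    by move=> hv; apply: (hUV (h p - h q) I (nbhs_singleton hU) (hsub _ I hv)).
  have [chi [hc _ hlt]] := hqc _ I hnV'.
  have := key chi hc p; rewrite hpq key => e.
  have [ht [hadd' _]] := tch_hom hc.
  have : toT (chi (h p - h q)) = 0.
    by rewrite -(hom_sub hadd') e subrr.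
  move=> /(congr1 tv); rewrite tv_toT tv0 frac_id // => h0.
  move: hlt; rewrite h0 tabs_dZ ?dZ0; [lra|split; lra].
pose bt := fun psi => match pselect (exists p, Eo p = psi) with
  | left hp => h (sval (cid hp)) | right _ => 0 end.
have btE : forall p, bt (Eo p) = h p.
  move=> p; rewrite /bt; case: pselect => [hp|hn]; last by exfalso; apply: hn; exists p.
  by apply: wd; exact: (svalP (cid hp)).
exists bt; split.
- by move=> _ _ [p _ <-] [q _ <-]; rewrite -hadd !btE hh.1.
- move=> _ U [p0 _ <-]; rewrite btE => hU.
  have hU0 : nbhs (0:B) [set w | U (w + h p0)].
    have hc : (fun w => w + h p0) @ (0:B) --> h p0.
      rewrite -{2}(add0r (h p0)); apply: cvg_add; [exact: cvg_id|exact: cvg_cst].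
    exact: hc _ hU.
  have [hsep hbas] := hB.
  have [V [hV hsub hqc]] := hbas _ hU0.
  exists [set beta | exists chi, [/\ tch chi,
     (forall a, setT a -> V a -> tabs (chi a) <= 1/4) &
     forall x y, xval beta x y = chi (b x y)]], (1/4).
  split; [exact: equicont_polar|lra|].
  move=> _ [p _ <-] hle; rewrite /= btE.
  have : V (h p - h p0).
    apply: contrapT => hnV.
    have [chi [hc hpol hlt]] := hqc _ I hnV.
    have := hle (MkXT (tch_comp hb hc)) (ex_intro _ chi (And3 hc hpol (fun x y => erefl))).
    rewrite !key.
    have [ht [hadd' _]] := tch_hom hc.
    change (dZ (chi (h p) - chi (h p0)) <= 1/4 -> False).
    rewrite -tmd_toT tmdE (hom_sub hadd') tv_toT dZ_frac -tabs_dZ //.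
    move=> h'; lra.
  by move=> hv; have := hsub _ I hv => /=; rewrite subrK.
- by move=> x y; rewrite -hEotens btE hht.
Qed.

End Main.


Theorem theorem3p6 (R : realType) (G H : topologicalZmodType)
  (hG : @inQ R G) (hH : @inQ R H)
  (P : topologicalZmodType) (tens : G -> H -> P)
  (htens : is_tensor_product tens)
  (Eo : P -> @XT R G H -> R)
  (hEo : cont_hom_X' Eo)
  (hEotens : forall x y, Eo (tens x y) = Emap x y) :
  is_Q_tensor_product (range Eo) (@Emap R G H).
Proof.
split.
- split.
  + exact: (@part_haus R G H P Eo hEo).
  + exact: (@part_basis R G H P Eo hEo).
- have [htb _] := htens.
  have [tx ty tcx tcy tc0] := htb.
  have [_ _ hcont] := hEo.
  split.
  - by move=> x y; exists (tens x y).
  - split.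
    + move=> x x' y; apply: funext => b; rewrite /Emap /xadd.
      by case: (xprop b) => _ [hx _] _ _ _; rewrite hx.
    + move=> x y y'; apply: funext => b; rewrite /Emap /xadd.
      by case: (xprop b) => _ [_ hy] _ _ _; rewrite hy.
  - move=> y x0 U hU.
    have hU' := @xnbhs_SX' _ _ _ _ _ _ hU; rewrite -hEotens in hU'.
    have hN : \forall x \near x0, (range Eo (Eo (tens x y)) -> U (Eo (tens x y))) :=
      tcx y x0 _ (hcont _ _ hU').
    apply: filterS hN => x /= h; rewrite -hEotens; apply: h.
    by exists (tens x y).
  - move=> x y0 U hU.
    have hU' := @xnbhs_SX' _ _ _ _ _ _ hU; rewrite -hEotens in hU'.
    have hN : \forall y \near y0, (range Eo (Eo (tens x y)) -> U (Eo (tens x y))) :=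
      tcy x y0 _ (hcont _ _ hU').
    apply: filterS hN => y /= h; rewrite -hEotens; apply: h.
    by exists (tens x y).
  - move=> U hU.
    have hU' := @xnbhs_SX' _ _ _ _ _ _ hU; rewrite -hEotens (bihom_x0 htb) in hU'.
    have hN : \forall p \near ((0 : G), (0 : H)),
        (range Eo (Eo (tens p.1 p.2)) -> U (Eo (tens p.1 p.2))) :=
      tc0 _ (hcont _ _ hU').
    apply: filterS hN => p /= h; rewrite -hEotens; apply: h.
    by exists (tens p.1 p.2).
- move=> B b hB hb; exact: (@part_univ R G H P tens htens Eo hEo hEotens B b hB hb).
Qed.
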